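(* Let $a,b$ be independent indeterminates over $\mathbb Q$ and $\mathbb Q_{a,b}:=\mathbb Q(a,b)$. The point $P_0=(-4db,\,4d^2)$ lies on $E_{a,b}$ and has infinite order in the Mordell–Weil group $E_{a,b}(\mathbb Q_{a,b})$.
   Context: $d=d(a,b):=-4b^3+(a^2-30a+1)b^2+2a(3a+1)(4a-7)b-a(4a^4-4a^3-40a^2+91a-4)$. $E_{a,b}$ is the elliptic curve over $\mathbb Q(a,b)$ given by $y^2=x^3+d(a^2-30a+1)x^2-8d^2a(3a+1)(4a-7)x-16d^3a(4a^4-4a^3-40a^2+91a-4)$. *)

(* Defs.v *)
From HB Require Import structures.
From mathcomp Require Import all_boot all_order all_algebra.
Set Implicit Arguments. Unset Strict Implicit. Unset Printing Implicit Defensive.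
Import Order.TTheory GRing.Theory Num.Theory.
Local Open Scope ring_scope.

(* Points of a Weierstrass curve y^2 = x^3 + a2 x^2 + a4 x + a6 over a field K:
   None is the point at infinity O, Some (x, y) an affine point. *)
Definition on_curve (K : fieldType) (a2 a4 a6 : K) (P : option (K * K)) : bool :=
  if P is Some (x, y) then y ^+ 2 == x ^+ 3 + a2 * x ^+ 2 + a4 * x + a6 else true.

(* The chord-tangent group law (neutral element O = None).  It does not
   involve a6, which is nevertheless kept as a parameter for uniformity. *)
Definition ec_add (K : fieldType) (a2 a4 a6 : K) (P Q : option (K * K)) : option (K * K) :=
  match P, Q with
  | None, _ => Q
  | _, None => P
  | Some (x1, y1), Some (x2, y2) =>
      if (x1 == x2) && (y1 == - y2) then None
      else
        let l := if x1 == x2 then (3%:R * x1 ^+ 2 + 2%:R * a2 * x1 + a4) / (2%:R * y1)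
                 else (y2 - y1) / (x2 - x1) in
        let x3 := l ^+ 2 - a2 - x1 - x2 in
        Some (x3, - (y1 + l * (x3 - x1)))
  end.

Definition ec_mul (K : fieldType) (a2 a4 a6 : K) (n : nat) (P : option (K * K)) : option (K * K) :=
  iter n (ec_add a2 a4 a6 P) None.

Definition infinite_order (K : fieldType) (a2 a4 a6 : K) (P : option (K * K)) : Prop :=
  forall n : nat, (0 < n)%N -> ec_mul a2 a4 a6 n P <> None.

(* Q(a,b) = fraction field of Q[a][b]; a and b independent indeterminates. *)
Notation Qab := {fraction {poly {poly rat}}} (only parsing).
Definition ta : Qab := tofrac (('X : {poly rat})%:P).
Definition tb : Qab := tofrac ('X : {poly {poly rat}}).

Definition dab (a b : Qab) : Qab :=
  - 4%:R * b ^+ 3 + (a ^+ 2 - 30%:R * a + 1) * b ^+ 2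
  + 2%:R * a * (3%:R * a + 1) * (4%:R * a - 7%:R) * b
  - a * (4%:R * a ^+ 4 - 4%:R * a ^+ 3 - 40%:R * a ^+ 2 + 91%:R * a - 4%:R).

Definition d : Qab := dab ta tb.
Definition E_a2 : Qab := d * (ta ^+ 2 - 30%:R * ta + 1).
Definition E_a4 : Qab := - 8%:R * d ^+ 2 * ta * (3%:R * ta + 1) * (4%:R * ta - 7%:R).
Definition E_a6 : Qab :=
  - 16%:R * d ^+ 3 * ta *
    (4%:R * ta ^+ 4 - 4%:R * ta ^+ 3 - 40%:R * ta ^+ 2 + 91%:R * ta - 4%:R).

Definition P0 : option (Qab * Qab) := Some (- 4%:R * d * tb, 4%:R * d ^+ 2).

(* Main.v *)
Require Import Defs.
From Stdlib Require Import Ring Field ZArith InitialRing Lia.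
From HB Require Import structures.
From mathcomp Require Import all_boot all_order all_algebra.
Import GRing.Theory.
Local Open Scope ring_scope.

Section G.
Variable R : comPzRingType.
Definition rT : Type := R.
Definition r0 : rT := 0.
Definition r1 : rT := 1.
Definition radd (x y : rT) : rT := x + y.
Definition rmul (x y : rT) : rT := x * y.
Definition rsub (x y : rT) : rT := x - y.
Definition ropp (x : rT) : rT := - x.
Definition rnat (n : nat) : rT := n%:R.
Lemma RthG : ring_theory r0 r1 radd rmul rsub ropp (@eq rT).
Proof.
rewrite /r0 /r1 /radd /rmul /rsub /ropp.
split=> //.
- exact: add0r. - exact: addrC. - exact: addrA. - exact: mul1r. - exact: mulrC.
- exact: mulrA. - exact: mulrDl. - exact: subrr.
Qed.
Definition rphi (z : Z) : rT :=
  match z with Z0 => r0 | Zpos p => rnat (Pos.to_nat p) | Zneg p => ropp (rnat (Pos.to_nat p)) end.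
Lemma rphi_gen z : rphi z = gen_phiZ r0 r1 radd rmul ropp z.
Proof.
have Hp : forall p, rnat (Pos.to_nat p) = gen_phiPOS r1 radd rmul p.
  move=> p; rewrite -(same_gen (Eqsth rT) (Eq_ext radd rmul ropp) (Rth_ARth (Eqsth rT) (Eq_ext radd rmul ropp) RthG)).
  elim: p => [p IH|p IH|] /=.
  - by rewrite Pos2Nat.inj_xI -IH /rnat /radd /rmul /r1 multE mulrSr natrM addrC.
  - by rewrite Pos2Nat.inj_xO -IH /rnat /radd /rmul /r1 multE natrM.
  - by [].
case: z => [|p|p] //=; by rewrite Hp.
Qed.
Lemma rmorph_phi : ring_morph r0 r1 radd rmul rsub ropp (@eq rT)
   Z0 (Zpos xH) Z.add Z.mul Z.sub Z.opp Z.eqb rphi.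
Proof.
have M := gen_phiZ_morph (Eqsth rT) (Eq_ext radd rmul ropp) RthG.
case: M => h0 h1 hadd hsub hmul hopp heq.
split; move=> *; rewrite ?rphi_gen //; by [apply: hadd|apply: hsub|apply: hmul|apply: hopp|apply: heq].
Qed.
End G.

Ltac rcst t :=
  match t with
  | rnat _ ?n => let z := eval vm_compute in (Z.of_nat n) in constr:(z)
  | r0 _ => constr:(Z0)
  | r1 _ => constr:(Zpos xH)
  | _ => constr:(NotConstant)
  end.


Section E.
Variable R : comPzRingType.
Lemma rnatE n : (n%:R : R) = rnat R n. Proof. by []. Qed.
Lemma raddE (x y : R) : x + y = radd R x y. Proof. by []. Qed.
Lemma rmulE (x y : R) : x * y = rmul R x y. Proof. by []. Qed.
Lemma roppE (x : R) : - x = ropp R x. Proof. by []. Qed.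
Lemma r0E : (0 : R) = r0 R. Proof. by []. Qed.
Lemma r1E : (1 : R) = r1 R. Proof. by []. Qed.
Lemma rexpS (x : R) n : x ^+ n.+1 = x * x ^+ n. Proof. exact: exprS. Qed.
Lemma rexp0 (x : R) : x ^+ 0 = 1. Proof. exact: expr0. Qed.
End E.
Ltac prep R := rewrite ?(rexpS R) ?(rexp0 R) ?(rnatE R) ?(rmulE R) ?(roppE R) ?(raddE R) ?(r0E R) ?(r1E R);
  match goal with |- ?l = ?r => change (@eq (rT R) l r) end.

Definition QI : comPzRingType := {fraction {poly {poly rat}}}.
Add Ring QabRing : (RthG QI) (morphism (rmorph_phi QI), constants [rcst]).
Definition RI : comPzRingType := rat.
Add Ring RatRing : (RthG RI) (morphism (rmorph_phi RI), constants [rcst]).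
Ltac qring := prep QI; ring.
Ltac rring := prep RI; ring.

Set Implicit Arguments. Unset Strict Implicit. Unset Printing Implicit Defensive.

Notation RR := {poly {poly rat}}.
Ltac zlia := rewrite ?natrE -?plusE -?multE -?minusE; lia.

Lemma szM (p q : RR) : p != 0 -> q != 0 ->
  Z.of_nat (size (p*q)) = Z.sub (Z.add (Z.of_nat (size p)) (Z.of_nat (size q))) 1.
Proof.
move=> hp hq; rewrite size_mul //.
have /ltP : (0 < size p)%N by rewrite size_poly_gt0.
rewrite -plusE. set sp := size p. set sq := size q. lia.
Qed.

Definition O (f : {fraction RR}) (n : Z) : Prop :=
  exists p q : RR, [/\ q != 0, f * tofrac q = tofrac p &
     p = 0 \/ Z.le (Z.of_nat (size p)) (Z.add (Z.of_nat (size q)) n)].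

Lemma O_le f m n : O f m -> Z.le m n -> O f n.
Proof. case=> p [q [hq hf hs]] hmn; exists p, q; split=> //; case: hs=> [->|hs]; [by left|right; lia]. Qed.

Lemma O0 n : O 0 n.
Proof. exists 0, 1; split; rewrite ?oner_eq0 ?mul0r ?rmorph0 //; by left. Qed.

Lemma Hsz (p q q' : RR) n : q != 0 -> q' != 0 ->
  (p = 0 \/ Z.le (Z.of_nat (size p)) (Z.add (Z.of_nat (size q)) n)) ->
  (p * q' = 0 \/ Z.le (Z.of_nat (size (p * q'))) (Z.add (Z.of_nat (size (q * q'))) n)).
Proof.
move=> hq hq' [->|hs]; first by left; rewrite mul0r.
have [->|hp] := eqVneq p 0; first by left; rewrite mul0r.
right; rewrite !szM //; lia.
Qed.

Lemma O_add f g n : O f n -> O g n -> O (f + g) n.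
Proof.
case=> p1 [q1 [hq1 hf hs1]] [p2 [q2 [hq2 hg hs2]]].
exists (p1 * q2 + p2 * q1), (q1 * q2); split.
- by rewrite mulf_neq0.
- rewrite rmorphD !rmorphM /= -hf -hg; qring.
have := Hsz hq1 hq2 hs1; have := Hsz hq2 hq1 hs2; rewrite (mulrC q2 q1).
set u := p1 * q2; set v := p2 * q1; set S := size (q1 * q2).
have [->|huv] := eqVneq (u + v) 0; first by left.
move=> h2 h1; right.
have hsz := size_polyD u v.
case: (leqP (size u) (size v)) hsz => huv' hsz.
- move/leP: hsz => hsz; move/leP: huv'=> huv'.
  case: h2 => [hv|hv]. 2:{ move: hsz huv' hv; set A := size (u+v); set B := size v; set C := size u; move=> *; lia. }
  rewrite hv size_poly0 in huv'. have hu0 : size u == 0%N by apply/eqP; move: huv'; set C := size u; move=> ?; lia.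
  move: hu0; rewrite size_poly_eq0 => /eqP hu. by rewrite hu hv addr0 eqxx in huv.
- move/leP: hsz => hsz; move/ltP: huv'=> huv'.
  case: h1 => [hu|hu]; last by move: hsz huv' hu; set A := size (u+v); set B := size v; set C := size u; move=> *; lia.
  rewrite hu size_poly0 in huv'. move: huv'; set C := size v; move=> ?; lia.
Qed.

Lemma O_opp f n : O f n -> O (- f) n.
Proof.
case=> p [q [hq hf hs]]; exists (- p), q; split=> //.
- by rewrite rmorphN /= -hf mulNr.
- by rewrite size_opp; case: hs=> [->|]; [left; rewrite oppr0|right].
Qed.

Lemma O_mul f g m n : O f m -> O g n -> O (f * g) (Z.add m n).
Proof.
case=> p1 [q1 [hq1 hf hs1]] [p2 [q2 [hq2 hg hs2]]].
exists (p1 * p2), (q1 * q2); split.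
- by rewrite mulf_neq0.
- rewrite !rmorphM /= -hf -hg; qring.
have [->|hp1] := eqVneq p1 0; first by left; rewrite mul0r.
have [->|hp2] := eqVneq p2 0; first by left; rewrite mulr0.
case: hs1 => [/eqP|hs1]; first by rewrite (negbTE hp1).
case: hs2 => [/eqP|hs2]; first by rewrite (negbTE hp2).
right; rewrite !szM //; lia.
Qed.

Lemma O_poly (p : RR) : O (tofrac p) (Z.sub (Z.of_nat (size p)) 1).
Proof. exists p, 1; split; rewrite ?oner_eq0 ?rmorph1 ?mulr1 //; right; have -> : size (1 : RR) = 1%N by rewrite size_poly1. lia. Qed.

Lemma O_1 : O 1 0.
Proof. rewrite -(rmorph1 (@tofrac RR)); apply: O_le (O_poly _) _. have -> : size (1 : RR) = 1%N by rewrite size_poly1. lia. Qed.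

Lemma O_exp f m k : O f m -> O (f ^+ k) (Z.mul (Z.of_nat k) m).
Proof.
move=> h; elim: k => [|k IH]; first by rewrite expr0; apply: O_le O_1 _; lia.
rewrite exprS; apply: O_le (O_mul h IH) _; lia.
Qed.

Lemma O_tb : O tb 1.
Proof. apply: O_le (O_poly _) _; rewrite size_polyX; zlia. Qed.
Lemma O_ta : O ta 0.
Proof. apply: O_le (O_poly _) _; move: (size_polyC_leq1 ('X : {poly rat})) => /leP; set s := size _; move=> ?; zlia. Qed.
Lemma O_nat k : O (k%:R) 0.
Proof. rewrite -(rmorph_nat (@tofrac _)); apply: O_le (O_poly _) _; rewrite -polyC_natr; move: (size_polyC_leq1 (k%:R : {poly rat})) => /leP; set s := size _; move=> ?; zlia. Qed.


Definition C (c : rat) : {fraction RR} := tofrac ((c%:P)%:P).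
Definition A (f : {fraction RR}) (c : rat) (n : nat) : Prop :=
  O (f - C c * tb ^+ n) (Z.sub (Z.of_nat n) 1).

Lemma CD c e : C (c + e) = C c + C e.
Proof. by rewrite /C !polyCD rmorphD. Qed.
Lemma CN c : C (- c) = - C c.
Proof. by rewrite /C !polyCN rmorphN. Qed.
Lemma CB c e : C (c - e) = C c - C e.
Proof. by rewrite CD CN. Qed.
Lemma CM c e : C (c * e) = C c * C e.
Proof. by rewrite /C !polyCM rmorphM. Qed.
Lemma Cnat k : C k%:R = k%:R.
Proof. by rewrite /C !polyC_natr rmorph_nat. Qed.
Lemma C0 : C 0 = 0. Proof. exact: (Cnat 0). Qed.
Lemma C1 : C 1 = 1. Proof. exact: (Cnat 1). Qed.
Lemma C_neq0 c : c != 0 -> C c != 0.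
Proof. by move=> h; rewrite /C tofrac_eq0 !polyC_eq0. Qed.
Lemma O_C c : O (C c) 0.
Proof. apply: O_le (O_poly _) _; move: (size_polyC_leq1 (c%:P : {poly rat})) => /leP; set s := size _; move=> ?; zlia. Qed.

Lemma CE c : C c = tofrac ((c%:P)%:P). Proof. by []. Qed.
Opaque C.
Lemma CV c : c != 0 -> C (c^-1) = (C c)^-1.
Proof.
move=> h; apply: (mulIf (C_neq0 h)).
rewrite (mulVf (C_neq0 h)) -CM mulVf; [exact: C1 | exact: h].
Qed.

Lemma O_CX c n : O (C c * tb ^+ n) (Z.of_nat n).
Proof. apply: O_le (O_mul (O_C c) (O_exp n O_tb)) _; lia. Qed.

Lemma A_O f c n : A f c n -> O f (Z.of_nat n).
Proof.
move=> h; have -> : f = (f - C c * tb ^+ n) + C c * tb ^+ n by rewrite subrK.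
apply: O_add; [apply: O_le h _; lia| exact: O_CX].
Qed.

Lemma A_inv g e n : A g e n -> e != 0 -> g != 0 /\ O g^-1 (Z.opp (Z.of_nat n)).
Proof.
case=> p [q [hq hr hs]] he.
set E : RR := (e%:P)%:P.
have hE : e%:P != 0 by rewrite polyC_eq0.
set h := E * 'X^n * q + p.
have hgq : g * tofrac q = tofrac h.
  rewrite /h rmorphD !rmorphM /= rmorphXn /= -hr -/tb CE; qring.
have hsz1 : size (E * 'X^n * q) = (size q + n)%N.
  have hX : ('X^n : RR) != 0 by rewrite monic_neq0 // monicXn.
  rewrite -mulrA size_Cmul // size_mul // size_polyXn addSn /= addnC //.
have hsz : size h = (size q + n)%N.
  rewrite /h size_polyDl // hsz1.
  case: hs => [->|hs]; first by rewrite size_poly0 addn_gt0 size_poly_gt0 hq.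
  apply/ltP; move: hs; set s := size p; set t := size q; move=> ?; zlia.
have hh : h != 0.
  by rewrite -size_poly_eq0 hsz addn_eq0 size_poly_eq0 (negbTE hq).
have hg : g != 0.
  apply/eqP=> g0; move: hgq; rewrite g0 mul0r => /esym/eqP; rewrite tofrac_eq0; exact/negP.
split=> //; exists q, h; split=> //.
- by rewrite -hgq mulrA mulVf // mul1r.
- right; rewrite hsz; set t := size q; zlia.
Qed.

Lemma A_add f g c e n : A f c n -> A g e n -> A (f + g) (c + e) n.
Proof.
move=> h1 h2; rewrite /A CD.
have -> : f + g - (C c + C e) * tb ^+ n = (f - C c * tb ^+ n) + (g - C e * tb ^+ n) by qring.
exact: O_add.
Qed.

Lemma A_opp f c n : A f c n -> A (- f) (- c) n.
Proof.
move=> h1; rewrite /A CN.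
have -> : - f - - C c * tb ^+ n = - (f - C c * tb ^+ n) by qring.
exact: O_opp.
Qed.

Lemma A_sub f g c e n : A f c n -> A g e n -> A (f - g) (c - e) n.
Proof. by move=> h1 h2; apply: A_add h1 (A_opp h2). Qed.

Lemma A_mul f g c e m n : A f c m -> A g e n -> A (f * g) (c * e) (m + n).
Proof.
move=> h1 h2; rewrite /A CM exprD.
have -> : f * g - C c * C e * (tb ^+ m * tb ^+ n) =
   (f - C c * tb ^+ m) * g + (C c * tb ^+ m) * (g - C e * tb ^+ n) by qring.
apply: O_add.
- apply: O_le (O_mul h1 (A_O h2)) _; zlia.
- apply: O_le (O_mul (O_CX c m) h2) _; zlia.
Qed.

Lemma A_of_O f n : O f (Z.sub (Z.of_nat n) 1) -> A f 0 n.
Proof. by rewrite /A C0 mul0r subr0. Qed.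

Lemma A_nat k : A (k%:R) (k%:R) 0.
Proof. by rewrite /A Cnat expr0 mulr1 subrr; apply: O0. Qed.

Lemma A_neq0 f c n : A f c n -> c != 0 -> f != 0.
Proof. by move=> h hc; case: (A_inv h hc). Qed.

Lemma A_neq f g c e n : A f c n -> A g e n -> c != e -> f != g.
Proof.
move=> h1 h2 hce; have := A_neq0 (A_sub h1 h2); rewrite !subr_eq0; exact.
Qed.

Lemma A_div f g c e m n : A f c m -> A g e n -> e != 0 -> (n <= m)%N ->
  A (f / g) (c / e) (m - n).
Proof.
move=> h1 h2 he hnm.
have [hg hig] := A_inv h2 he.
rewrite /A CM (CV he).
set k := (m - n)%N.
have hm : tb ^+ m = tb ^+ k * tb ^+ n by rewrite -exprD subnK.
have e1 : C e * (C e)^-1 = 1 := mulfV (C_neq0 he).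
have e2 : g * g^-1 = 1 := mulfV hg.
have -> : f / g - C c * (C e)^-1 * tb ^+ k =
  (C e * (f - C c * tb ^+ m) - C c * tb ^+ k * (g - C e * tb ^+ n)) * (C e)^-1 * g^-1.
  transitivity (f * g^-1 * (C e * (C e)^-1) - C c * tb ^+ k * (C e)^-1 * (g * g^-1)).
    by rewrite e1 e2; qring.
  by rewrite hm; qring.
have hCi : O (C e)^-1 0 by rewrite -CV //; apply: O_C.
apply: O_le (O_mul (O_mul _ hCi) hig) _.
- apply: O_add.
  + apply: O_mul (O_C e) h1.
  + apply: O_opp; apply: O_le (O_mul (O_CX c k) h2) _.
    rewrite /k; move/leP: hnm; zlia.
- rewrite /k; move/leP: hnm; zlia.
Qed.

Lemma O_addM f g m n : O f m -> O g n -> O (f + g) (Z.max m n).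
Proof. move=> h1 h2; apply: O_add; [apply: O_le h1 _|apply: O_le h2 _]; lia. Qed.

Ltac obuild := lazymatch goal with
 | |- O (_ + _) _ => eapply O_addM; [obuild|obuild]
 | |- O (_ * _) _ => eapply O_mul; [obuild|obuild]
 | |- O (- _) _ => eapply O_opp; obuild
 | |- O (_ ^+ _) _ => eapply O_exp; obuild
 | |- O tb _ => exact O_tb
 | |- O ta _ => exact O_ta
 | |- O (_%:R) _ => exact: O_nat
 | |- O 1 _ => exact O_1
 | |- O (C _) _ => exact: O_C
 end.
Ltac osolve := eapply O_le; [obuild | zlia].

Definition rr : {fraction RR} := (ta ^+ 2 - 30%:R * ta + 1) * tb ^+ 2
  + 2%:R * ta * (3%:R * ta + 1) * (4%:R * ta - 7%:R) * tb
  - ta * (4%:R * ta ^+ 4 - 4%:R * ta ^+ 3 - 40%:R * ta ^+ 2 + 91%:R * ta - 4%:R).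

Lemma d_eq : d = - 4%:R * tb ^+ 3 + rr.
Proof. rewrite /d /dab /rr; qring. Qed.

Lemma O_rr : O rr 2.
Proof. rewrite /rr; osolve. Qed.

Lemma O_d : O d 3.
Proof. rewrite d_eq; apply: O_add; [osolve | apply: O_le O_rr _; lia]. Qed.

Lemma O_a2 : O E_a2 3.
Proof. rewrite /E_a2; eapply O_le; [eapply O_mul; [exact O_d| obuild] | zlia]. Qed.

Lemma O_a4 : O E_a4 6.
Proof.
rewrite /E_a4; eapply O_le.
  eapply O_mul; [eapply O_mul; [eapply O_mul; [eapply O_mul; [ obuild | eapply O_exp; exact O_d] | obuild] |obuild] | obuild].
zlia.
Qed.

Lemma A_x0 : A (- 4%:R * d * tb) 16%:R 4.
Proof.
rewrite /A Cnat.
have -> : - 4%:R * d * tb - 16%:R * tb ^+ 4 = - 4%:R * tb * rr by rewrite d_eq; qring.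
eapply O_le; [eapply O_mul; [obuild | exact O_rr] | zlia].
Qed.

Lemma A_y0 : A (4%:R * d ^+ 2) 64%:R 6.
Proof.
rewrite /A Cnat.
have -> : 4%:R * d ^+ 2 - 64%:R * tb ^+ 6 = 4%:R * rr * (rr - 8%:R * tb ^+ 3) by rewrite d_eq; qring.
eapply O_le; [eapply O_mul; [eapply O_mul; [obuild | exact O_rr] | eapply O_addM; [exact O_rr| obuild]] | zlia].
Qed.

Lemma on_P0 : on_curve E_a2 E_a4 E_a6 P0.
Proof.
rewrite /on_curve /P0 -subr_eq0; apply/eqP.
rewrite /E_a2 /E_a4 /E_a6.
have -> : forall D a b : {fraction RR},
  (4%:R * D ^+ 2) ^+ 2 - ((- 4%:R * D * b) ^+ 3 + D * (a ^+ 2 - 30%:R * a + 1) * (- 4%:R * D * b) ^+ 2 +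
   - 8%:R * D ^+ 2 * a * (3%:R * a + 1) * (4%:R * a - 7%:R) * (- 4%:R * D * b) +
   - 16%:R * D ^+ 3 * a * (4%:R * a ^+ 4 - 4%:R * a ^+ 3 - 40%:R * a ^+ 2 + 91%:R * a - 4%:R))
  = 16%:R * D ^+ 3 * (D - dab a b).
  by move=> D a b; rewrite /dab; qring.
by rewrite /d subrr mulr0.
Qed.

Lemma step_add x1 y1 x2 y2 X1 Y1 X2 Y2 :
  A x1 X1 4 -> A y1 Y1 6 -> A x2 X2 4 -> A y2 Y2 6 -> X1 != X2 ->
  exists x3 y3, ec_add E_a2 E_a4 E_a6 (Some (x1, y1)) (Some (x2, y2)) = Some (x3, y3) /\
   A x3 ((Y2 - Y1) / (X2 - X1) * ((Y2 - Y1) / (X2 - X1)) - 0 - X1 - X2) 4 /\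
   A y3 (- (Y1 + (Y2 - Y1) / (X2 - X1) *
       (((Y2 - Y1) / (X2 - X1) * ((Y2 - Y1) / (X2 - X1)) - 0 - X1 - X2) - X1))) 6.
Proof.
move=> hx1 hy1 hx2 hy2 hX.
have hx : x1 != x2 := A_neq hx1 hx2 hX.
rewrite /ec_add (negbTE hx) /=.
do 2 eexists; split; first reflexivity.
have hl : A ((y2 - y1) / (x2 - x1)) ((Y2 - Y1) / (X2 - X1)) 2.
  apply: (A_div (m := 6) (n := 4)); [exact: A_sub| exact: A_sub | by rewrite subr_eq0 eq_sym | by []].
have ha2 : A E_a2 0 4 by apply: A_of_O; apply: O_le O_a2 _; lia.
have hx3 := A_sub (A_sub (A_sub (A_mul hl hl) ha2) hx1) hx2.
rewrite expr2; split; first exact: hx3.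
apply: A_opp; apply: A_add hy1 _.
exact: (A_mul hl (A_sub hx3 hx1)).
Qed.

Lemma step_dbl x1 y1 :
  A x1 16%:R 4 -> A y1 64%:R 6 ->
  exists x3 y3, ec_add E_a2 E_a4 E_a6 (Some (x1, y1)) (Some (x1, y1)) = Some (x3, y3) /\
   A x3 4%:R 4 /\ A y3 8%:R 6.
Proof.
move=> hx1 hy1.
have hy : y1 != - y1.
  rewrite -addr_eq0; apply: (A_neq0 (A_add hy1 hy1)); by rewrite -natrD Num.Theory.pnatr_eq0.
rewrite /ec_add eqxx (negbTE hy) /=.
do 2 eexists; split; first reflexivity.
have hn : A (3%:R * x1 ^+ 2 + 2%:R * E_a2 * x1 + E_a4) (3%:R * (16%:R * 16%:R) + 0 + 0) 8.
  apply: A_add; [apply: A_add|].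
  - rewrite expr2; exact: (A_mul (A_nat 3) (A_mul hx1 hx1)).
  - apply: A_of_O; eapply O_le; [eapply O_mul; [eapply O_mul; [obuild|exact O_a2]|exact: A_O hx1]|zlia].
  - apply: A_of_O; apply: O_le O_a4 _; zlia.
have hd : A (2%:R * y1) (2%:R * 64%:R) 6 by exact: (A_mul (A_nat 2) hy1).
have h128 : (2%:R * 64%:R : rat) != 0 by rewrite -natrM Num.Theory.pnatr_eq0.
have hl := A_div hn hd h128 isT.
have hL : (3%:R * (16%:R * 16%:R) + 0 + 0) / (2%:R * 64%:R) = 6%:R :> rat.
  apply: (mulIf h128); rewrite divfK //; rring.
rewrite hL in hl.
have ha2 : A E_a2 0 4 by apply: A_of_O; apply: O_le O_a2 _; lia.
have hx3 := A_sub (A_sub (A_sub (A_mul hl hl) ha2) hx1) hx1.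
have hy3 := A_opp (A_add hy1 (A_mul hl (A_sub hx3 hx1))).
rewrite expr2; split.
- by move: hx3; congr A; rring.
- by move: hy3; congr A; rring.
Qed.

Lemma coef_step (k : nat) : (2 <= k)%N ->
  let w := (k%:R : rat)^-1 in let w' := (k.+1%:R : rat)^-1 in
  let X2 := 16%:R * w ^+ 2 in let Y2 := 64%:R * w ^+ 3 in
  let L := (Y2 - 64%:R) / (X2 - 16%:R) in
  [/\ (16%:R : rat) != X2,
      L * L - 0 - 16%:R - X2 = 16%:R * w' ^+ 2 &
      - (64%:R + L * (16%:R * w' ^+ 2 - 16%:R)) = 64%:R * w' ^+ 3].
Proof.
move=> hk w w' X2 Y2 L.
have hK : (k%:R : rat) != 0 by rewrite Num.Theory.pnatr_eq0 -lt0n; apply: leq_trans hk.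
have hKw : (k%:R : rat) * w = 1 by rewrite mulfV.
have hw0 : w != 0 by rewrite invr_eq0.
have hw1 : w + 1 != 0.
  apply/eqP => h; have : (k%:R : rat) * (w + 1) = 0 by rewrite h mulr0.
  rewrite mulrDr hKw mulr1 => /eqP; rewrite -(natrD _ 1 k) Num.Theory.pnatr_eq0 //.
set v := (w + 1)^-1.
have hs : (w + 1) * v = 1 by rewrite mulfV.
have hw' : w' = w * v.
  rewrite /w' /v /w -invfM mulrDr mulfV // mulr1 nat1r //.
have hX : (16%:R : rat) != X2.
  apply/eqP => h.
  have h16 : (16%:R : rat) != 0 by rewrite Num.Theory.pnatr_eq0.
  have hw2 : w ^+ 2 = 1 by apply: (mulfI h16); rewrite mulr1; exact: (esym h).
  have : (k ^ 2)%:R = (1 : rat).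
    rewrite natrX; transitivity (((k%:R : rat) * w) ^+ 2); first by rewrite exprMn hw2 mulr1.
    by rewrite hKw expr1n.
  move=> /eqP; rewrite Num.Theory.pnatr_eq1 => /eqP.
  by case: k hk {hK hKw hw0 hw1 w w' v hs hw' X2 Y2 L h hw2} => [|[|k]].
have hden : X2 - 16%:R != 0 by rewrite subr_eq0 eq_sym.
have hL : L = 4%:R * (w ^+ 2 + w + 1) * v.
  apply: (mulIf hden); rewrite /L divfK // /X2 /Y2.
  transitivity ((64%:R * w ^+ 3 - 64%:R) * ((w + 1) * v)); first by rewrite hs mulr1.
  rring.
split; [exact: hX | |].
- rewrite hL hw' /X2.
  transitivity (16%:R * (w * v) ^+ 2 + 16%:R * (1 + w ^+ 2) * (((w + 1) * v) ^+ 2 - 1)); first by rring.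
  by rewrite hs expr1n subrr mulr0 addr0.
- rewrite hL hw'.
  transitivity (64%:R * (w * v) ^+ 3 - 64%:R * w ^+ 2 * v * (((w + 1) * v) ^+ 2 - 1)
     + 64%:R * w * ((w + 1) * v - 1) + 64%:R * (w - 1) * (1 - (w + 1) * v)); first by rring.
  by rewrite hs expr1n !subrr !mulr0 !addr0.
Qed.


Lemma inv_mul k : (2 <= k)%N -> exists x y,
  ec_mul E_a2 E_a4 E_a6 k P0 = Some (x, y) /\
  A x (16%:R * ((k%:R : rat)^-1) ^+ 2) 4 /\ A y (64%:R * ((k%:R : rat)^-1) ^+ 3) 6.
Proof.
elim: k => // k IH hk.
have hS : ec_mul E_a2 E_a4 E_a6 k.+1 P0 = ec_add E_a2 E_a4 E_a6 P0 (ec_mul E_a2 E_a4 E_a6 k P0) by [].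
case: (ltnP k 2) => hk2.
- have k1 : k = 1%N by case: k hk hk2 IH hS => [|[|k]].
  subst k.
  have -> : ec_mul E_a2 E_a4 E_a6 2 P0 = ec_add E_a2 E_a4 E_a6 P0 P0 by [].
  have [x3 [y3 [-> [hx hy]]]] := step_dbl A_x0 A_y0.
  have h2 : (2%:R : rat) * 2%:R^-1 = 1 by rewrite mulfV // Num.Theory.pnatr_eq0.
  exists x3, y3; split; first reflexivity. split.
  + by move: hx; congr A.
  + by move: hy; congr A.
- have [x [y [hm [hx hy]]]] := IH hk2.
  rewrite hS hm /P0.
  have [hX e1 e2] := coef_step hk2.
  have [x3 [y3 [-> [hx3 hy3]]]] := step_add A_x0 A_y0 hx hy hX.
  exists x3, y3; split; first reflexivity. split.
  + by move: hx3; rewrite e1.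
  + by move: hy3; rewrite e1 e2.
Qed.

Theorem mainTheorem6 :
  on_curve E_a2 E_a4 E_a6 P0 /\ infinite_order E_a2 E_a4 E_a6 P0.
Proof.
split; first exact: on_P0.
move=> n; case: n => [|[|n]] // _.
have [x [y [-> _]]] := @inv_mul n.+2 isT.
discriminate.
Qed.
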